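(* Fix $a>0$, $b>0$, $c>0$, $\theta>0$ with $\zeta:=\frac{b^2-a(c-\theta)}{a^2}<0$. Let $\kappa=b/a$, $s=\sqrt{-\zeta}$, $z=\frac{c-\theta}{b}$, $p=\frac{b^2}{a(c-\theta)}$, $\bar x=\max\{0,\kappa-\frac{\theta}{2as}\}$, and $$\bar a_M=\frac{\Bigl(b+c^2-3c\theta+2\theta^2+\sqrt{b(b-2c\theta+2\theta^2)}\Bigr)b^2}{(c-\theta)^3}.$$ (Symmetric branch) If $a\le\frac{2b^2}{c-\theta}$, $P(0,\kappa-s)\ge0$ and $P(\bar x,\kappa+s)\ge0$, then the profile in which both players assign probability $\tfrac12$ to each of $\kappa-s$, $\kappa+s$ is an on-domain mixed equilibrium of the truncated contest. (Endpoint branch) If $\frac{2b^2}{c-\theta}\le a\le\bar a_M$, then the profile in which both players assign probability $1-p$ to $0$ and $p$ to $z$ is an on-domain mixed equilibrium of the truncated contest. Wherever the relevant branch condition holds, the equilibrium has $E[x]=E[y]=\kappa$, $\operatorname{Var}(x)=\operatorname{Var}(y)=-\zeta$, and common payoff $\tfrac12-\theta\kappa$.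
   Context: $P(x,y)=\tfrac12+(x-y)\bigl(c-b(x+y)+axy\bigr)$, $\bar P=\min\{1,\max\{0,P\}\}$. The truncated contest is the two-player complete-information game with efforts $x,y\ge0$ and payoffs $\bar P(x,y)-\theta x$ for $X$ and $1-\bar P(x,y)-\theta y$ for $Y$. An equilibrium is on-domain if $0\le P(x,y)\le1$ (so $\bar P=P$) for all pairs $(x,y)$ in the product of the supports of the equilibrium strategies. The condition $a\le\bar a_M$ is understood to require $\bar a_M$ to be a real number. *)

(* Defs.v *)
From Stdlib Require Import Reals Lra List.
Import ListNotations.
Open Scope R_scope.

Definition Pw (a b c x y : R) : R :=
  1/2 + (x - y) * (c - b * (x + y) + a * x * y).

Definition Pbar (a b c x y : R) : R := Rmin 1 (Rmax 0 (Pw a b c x y)).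

Definition payX (a b c th x y : R) : R := Pbar a b c x y - th * x.
Definition payY (a b c th x y : R) : R := 1 - Pbar a b c x y - th * y.

(* A finitely supported mixed strategy: list of (probability, effort). *)
Definition mixed := list (R * R).

Definition valid_mixed (s : mixed) : Prop :=
  Forall (fun wx => 0 <= fst wx /\ 0 <= snd wx) s /\
  fold_right (fun wx acc => fst wx + acc) 0 s = 1.

Definition Ex (s : mixed) (f : R -> R) : R :=
  fold_right (fun wx acc => fst wx * f (snd wx) + acc) 0 s.

Definition in_support (s : mixed) (x : R) : Prop :=
  exists w, In (w, x) s /\ 0 < w.

Definition EpayX a b c th (sx sy : mixed) : R :=
  Ex sx (fun x => Ex sy (fun y => payX a b c th x y)).
Definition EpayY a b c th (sx sy : mixed) : R :=
  Ex sx (fun x => Ex sy (fun y => payY a b c th x y)).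

Definition is_equilibrium a b c th (sx sy : mixed) : Prop :=
  valid_mixed sx /\ valid_mixed sy /\
  (forall sx', valid_mixed sx' -> EpayX a b c th sx' sy <= EpayX a b c th sx sy) /\
  (forall sy', valid_mixed sy' -> EpayY a b c th sx sy' <= EpayY a b c th sx sy).

Definition on_domain a b c (sx sy : mixed) : Prop :=
  forall x y, in_support sx x -> in_support sy y ->
    0 <= Pw a b c x y <= 1.

Definition mean (s : mixed) : R := Ex s (fun x => x).
Definition variance (s : mixed) : R := Ex s (fun x => (x - mean s) ^ 2).

Definition good_profile a b c th (s : mixed) : Prop :=
  is_equilibrium a b c th s s /\ on_domain a b c s s /\
  mean s = b / a /\
  variance s = - ((b ^ 2 - a * (c - th)) / a ^ 2) /\
  EpayX a b c th s s = 1/2 - th * (b / a) /\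
  EpayY a b c th s s = 1/2 - th * (b / a).

(* Main.v *)
Require Import Defs.
From Stdlib Require Import Reals Lra Psatz List.
Import ListNotations.
Open Scope R_scope.

Lemma Pw_anti a b c x y : Pw a b c y x = 1 - Pw a b c x y.
Proof. unfold Pw; field. Qed.

Lemma Pbar_anti a b c x y : Pbar a b c y x = 1 - Pbar a b c x y.
Proof.
  unfold Pbar. rewrite Pw_anti. set (q := Pw a b c x y).
  unfold Rmin, Rmax; repeat destruct Rle_dec; lra.
Qed.

Lemma payY_X a b c th x y : payY a b c th x y = payX a b c th y x.
Proof. unfold payY, payX. rewrite (Pbar_anti a b c x y). ring. Qed.

Lemma Pbar_le a b c x y : 0 <= Pw a b c x y -> Pbar a b c x y <= Pw a b c x y.
Proof. unfold Pbar, Rmin, Rmax; repeat destruct Rle_dec; lra. Qed.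
Lemma Pbar_le1 a b c x y : Pbar a b c x y <= 1.
Proof. unfold Pbar, Rmin, Rmax; repeat destruct Rle_dec; lra. Qed.
Lemma Pbar_neg a b c x y : Pw a b c x y < 0 -> Pbar a b c x y = 0.
Proof. unfold Pbar, Rmin, Rmax; repeat destruct Rle_dec; lra. Qed.
Lemma Pbar_eq a b c x y : 0 <= Pw a b c x y <= 1 -> Pbar a b c x y = Pw a b c x y.
Proof. unfold Pbar, Rmin, Rmax; repeat destruct Rle_dec; lra. Qed.

Lemma Ex_cons w x s f : Ex ((w,x)::s) f = w * f x + Ex s f.
Proof. reflexivity. Qed.

Lemma Ex_ext s f g : (forall x, f x = g x) -> Ex s f = Ex s g.
Proof. intros H; induction s as [|[w x] s IH]; simpl; [reflexivity|]. rewrite H, IH; reflexivity. Qed.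

Lemma Ex_add s f g : Ex s (fun y => f y + g y) = Ex s f + Ex s g.
Proof. induction s as [|[w x] s IH]; simpl; [ring|]. rewrite IH; ring. Qed.

Lemma Ex_scal s w f : Ex s (fun y => w * f y) = w * Ex s f.
Proof. induction s as [|[w' x] s IH]; simpl; [ring|]. rewrite IH; ring. Qed.

Lemma Ex_zero s : Ex s (fun _ => 0) = 0.
Proof. induction s as [|[w' x] s IH]; simpl; [ring|]. rewrite IH; ring. Qed.

Lemma Ex_swap s1 s2 F :
  Ex s1 (fun x => Ex s2 (fun y => F x y)) = Ex s2 (fun y => Ex s1 (fun x => F x y)).
Proof.
  induction s1 as [|[w x] s1 IH]; simpl.
  - symmetry; apply Ex_zero.
  - rewrite IH. rewrite Ex_add, Ex_scal. reflexivity.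
Qed.

Lemma Ex_le s f V :
  Forall (fun wx => 0 <= fst wx /\ 0 <= snd wx) s ->
  (forall x, 0 <= x -> f x <= V) ->
  Ex s f <= V * fold_right (fun wx acc => fst wx + acc) 0 s.
Proof.
  intros HF Hf; induction HF as [|[w x] s [Hw Hx] HF IH]; simpl in *; [lra|].
  specialize (Hf x Hx). nra.
Qed.

Lemma equilibrium_of a b c th (s : mixed) V :
  valid_mixed s ->
  (forall x, 0 <= x -> Ex s (fun y => payX a b c th x y) <= V) ->
  EpayX a b c th s s = V ->
  is_equilibrium a b c th s s /\ EpayX a b c th s s = V /\ EpayY a b c th s s = V.
Proof.
  intros Hv Hg HE.
  assert (HY : forall sy', EpayY a b c th s sy' = Ex sy' (fun y => Ex s (fun x => payX a b c th y x))).
  { intros sy'. unfold EpayY. rewrite Ex_swap. apply Ex_ext; intros y.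
    apply Ex_ext; intros x. apply payY_X. }
  split; [|split].
  - split; [exact Hv|split; [exact Hv|split]].
    + intros sx' [HF HS]. rewrite HE. unfold EpayX.
      pose proof (Ex_le sx' _ V HF Hg) as H. rewrite HS in H. lra.
    + intros sy' [HF HS]. rewrite HY. rewrite (HY s).
      replace (Ex s (fun y => Ex s (fun x => payX a b c th y x))) with (EpayX a b c th s s) by reflexivity.
      rewrite HE. pose proof (Ex_le sy' _ V HF Hg) as H. rewrite HS in H. lra.
  - exact HE.
  - rewrite HY. exact HE.
Qed.

Lemma sym_branch a b c th k s :
  0 < a -> 0 < th -> 0 < s -> s <= k ->
  b = a * k -> c = th + a * (k ^ 2 + s ^ 2) ->
  0 <= Pw a b c 0 (k - s) ->
  0 <= Pw a b c (Rmax 0 (k - th / (2 * a * s))) (k + s) ->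
  good_profile a b c th [(1/2, k - s); (1/2, k + s)].
Proof.
  intros ha hth hs hsk -> -> H0 Hbar.
  set (c := th + a * (k ^ 2 + s ^ 2)) in *.
  set (b := a * k) in *.
  assert (hk : 0 < k) by lra.
  assert (EP1 : forall x, Pw a b c x (k - s) = 1/2 + th*(x-k+s) + a*s*(s^2 - (x-k)^2))
    by (intros; unfold Pw, b, c; ring).
  assert (EP2 : forall x, Pw a b c x (k + s) = 1/2 - th*s - a*s^3 + th*(x-k) + a*s*(x-k)^2)
    by (intros; unfold Pw, b, c; ring).
  assert (ID : forall x, 1/2 * Pw a b c x (k - s) + 1/2 * Pw a b c x (k + s) - th * x
                         = 1/2 - th * k)
    by (intros; rewrite EP1, EP2; field).
  assert (hbk : b / a = k) by (unfold b; field; lra).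
  assert (P2pos : forall x, 0 <= x -> 0 <= Pw a b c x (k + s)).
  { intros x hx.
    set (h := th / (2 * a * s)) in *.
    assert (Hh : 2 * a * s * h = th) by (unfold h; field; lra).
    assert (hh : 0 < h) by (unfold h; apply Rdiv_lt_0_compat; nra).
    unfold Rmax in Hbar. destruct (Rle_dec 0 (k - h)) as [Hl|Hl].
    - assert (E : Pw a b c x (k + s) - Pw a b c (k - h) (k + s) = a * s * (x - k + h) ^ 2).
      { rewrite !EP2. rewrite <- Hh. ring. }
      assert (0 <= a * s * (x - k + h) ^ 2).
      { apply Rmult_le_pos; [nra|]. apply pow2_ge_0. }
      lra.
    - assert (E : Pw a b c x (k + s) - Pw a b c 0 (k + s) = x * (2 * a * s * (h - k) + a * s * x)).
      { rewrite !EP2. rewrite <- Hh. ring. }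
      assert (0 <= x * (2 * a * s * (h - k) + a * s * x)).
      { apply Rmult_le_pos; [lra|]. assert (0 < a*s) by nra. nra. }
      lra. }
  assert (P1pos : forall x, 0 <= x <= k -> 0 <= Pw a b c x (k - s)).
  { intros x [hx1 hx2].
    assert (E : k * Pw a b c x (k - s) = (k - x) * Pw a b c 0 (k - s)
                 + x * Pw a b c k (k - s) + a * s * k * x * (k - x)).
    { rewrite !EP1. ring. }
    assert (Hk1 : 0 < Pw a b c k (k - s)).
    { rewrite EP1. assert (0 < a * s ^ 3) by (apply Rmult_lt_0_compat; [lra| apply pow_lt; lra]).
      nra. }
    assert (0 <= (k - x) * Pw a b c 0 (k - s)) by (apply Rmult_le_pos; lra).
    assert (0 <= x * Pw a b c k (k - s)) by (apply Rmult_le_pos; lra).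
    assert (0 <= a * s * k * x * (k - x)).
    { apply Rmult_le_pos; [|lra]. apply Rmult_le_pos; [|lra]. apply Rmult_le_pos; [|lra]. nra. }
    assert (0 <= k * Pw a b c x (k - s)) by lra.
    nra. }
  assert (Hmid : 0 <= Pw a b c (k - s) (k + s) <= 1).
  { split. apply P2pos; lra. rewrite EP2. nra. }
  assert (Hmid' : 0 <= Pw a b c (k + s) (k - s) <= 1).
  { rewrite Pw_anti. lra. }
  assert (Hdiag : forall x, Pw a b c x x = 1/2) by (intros; unfold Pw; ring).
  assert (Hsupp : forall x, x = k - s \/ x = k + s ->
     Ex [(1/2, k - s); (1/2, k + s)] (fun y => payX a b c th x y) = 1/2 - th * k).
  { intros x Hx. simpl. unfold payX.
    rewrite (Pbar_eq a b c x (k - s)), (Pbar_eq a b c x (k + s)).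
    - pose proof (ID x). lra.
    - destruct Hx as [-> | ->]; [|rewrite Hdiag; lra]; exact Hmid.
    - destruct Hx as [-> | ->]; [rewrite Hdiag; lra|]; exact Hmid'. }
  assert (Hv : valid_mixed [(1/2, k - s); (1/2, k + s)]).
  { split. constructor; [simpl; lra|]. constructor; [simpl; lra|]. constructor. simpl; lra. }
  destruct (equilibrium_of a b c th [(1/2, k - s); (1/2, k + s)] (1/2 - th * k)) as [Heq [HX HY]].
  - exact Hv.
  - intros x hx. simpl. unfold payX.
    destruct (Rle_dec 0 (Pw a b c x (k - s))) as [Hp|Hp].
    + pose proof (Pbar_le a b c x (k - s) Hp).
      pose proof (Pbar_le a b c x (k + s) (P2pos x hx)).
      pose proof (ID x). lra.
    + assert (hxk : k < x).
      { destruct (Rlt_le_dec k x) as [|Hxk]; [assumption|].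
        exfalso. apply Hp. apply P1pos; lra. }
      rewrite (Pbar_neg a b c x (k - s)) by lra.
      pose proof (Pbar_le1 a b c x (k + s)). nra.
  - change (1/2 * Ex [(1/2, k - s); (1/2, k + s)] (fun y => payX a b c th (k - s) y)
       + (1/2 * Ex [(1/2, k - s); (1/2, k + s)] (fun y => payX a b c th (k + s) y) + 0)
       = 1/2 - th * k).
    rewrite (Hsupp (k - s)) by auto. rewrite (Hsupp (k + s)) by auto. simpl. lra.
  - unfold good_profile. rewrite hbk.
    split; [exact Heq|]. split.
    + intros x y [w1 [Hx _]] [w2 [Hy _]].
      simpl in Hx, Hy.
      destruct Hx as [Hx|[Hx|[]]]; destruct Hy as [Hy|[Hy|[]]];
        injection Hx; injection Hy; intros; subst x y;
        try (rewrite Hdiag; lra); assumption.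
    + assert (hm : mean [(1/2, k - s); (1/2, k + s)] = k) by (unfold mean; simpl; field).
      split; [exact hm|]. split; [|split; assumption].
      unfold variance. rewrite hm. simpl. unfold b, c. field. lra.
Qed.

Lemma end_core a b th z r x :
  0 < a -> 0 < b -> 0 < th -> 0 < z -> b < a * z ->
  0 <= r -> r ^ 2 = b ^ 2 * (1 - 2 * z * th) ->
  b * ((a * z - b) * z ^ 2) <= b * (1 - z * th) + r ->
  0 <= x ->
  0 <= 1/2 + (x - z) * (th + (a * z - b) * x).
Proof.
  intros ha hb hth hz hA hr hr2 hM hx.
  set (A := a * z - b) in *.
  assert (HA : 0 < A) by (unfold A; lra).
  set (Q := A * z ^ 2) in *.
  set (G := 2 * A * (1 - 2 * z * th) - (th - A * z) ^ 2).
  assert (E1 : 4 * A * (1/2 + (x - z) * (th + A * x)) = (2 * A * x + th - A * z) ^ 2 + G)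
    by (unfold G; field).
  assert (E2 : b ^ 2 * G * z ^ 2 = (b * (1 - z * th) + r - b * Q) * (b * Q - b * (1 - z * th) + r)).
  { unfold G, Q. replace ((b * (1 - z * th) + r - b * (A * z ^ 2)) *
      (b * (A * z ^ 2) - b * (1 - z * th) + r)) with (r ^ 2 - b ^ 2 * (1 - z * th - A * z ^ 2) ^ 2) by ring.
    rewrite hr2. ring. }
  assert (h12 : 0 <= 1 - 2 * z * th).
  { assert (0 <= r ^ 2) by (apply pow2_ge_0). assert (0 < b ^ 2) by (apply pow_lt; lra).
    destruct (Rle_dec 0 (1 - 2 * z * th)); [assumption|]. nra. }
  destruct (Rle_dec 0 (b * Q - b * (1 - z * th) + r)) as [Hc|Hc].
  - assert (HG0 : 0 <= b ^ 2 * G * z ^ 2) by (rewrite E2; apply Rmult_le_pos; lra).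
    assert (HG : 0 <= G).
    { assert (0 < b ^ 2 * z ^ 2) by (apply Rmult_lt_0_compat; apply pow_lt; lra).
      destruct (Rle_dec 0 G); [assumption|]. nra. }
    assert (0 <= (2 * A * x + th - A * z) ^ 2) by apply pow2_ge_0.
    assert (0 <= 4 * A * (1/2 + (x - z) * (th + A * x))) by lra.
    nra.
  - assert (hrb : r <= b).
    { destruct (Rle_dec r b); [assumption|].
      assert (b ^ 2 < r ^ 2) by nra. assert (0 < z * th) by nra. nra. }
    assert (hrr : b * (1 - 2 * z * th) <= r).
    { assert (b * r ^ 2 <= b * (b * r)) by (apply Rmult_le_compat_l; nra).
      rewrite hr2 in H. nra. }
    assert (HQ : Q < z * th) by nra.
    assert (HAz : A * z < th).
    { unfold Q in HQ. destruct (Rlt_le_dec (A * z) th); [assumption|]. nra. }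
    replace (1/2 + (x - z) * (th + A * x)) with ((1/2 - z * th) + A * x ^ 2 + (th - A * z) * x) by field.
    assert (0 <= A * x ^ 2) by (apply Rmult_le_pos; [lra|apply pow2_ge_0]).
    assert (0 <= (th - A * z) * x) by (apply Rmult_le_pos; lra).
    lra.
Qed.

Lemma end_branch a b c th z p :
  0 < a -> 0 < b -> 0 < th ->
  (b ^ 2 - a * (c - th)) / a ^ 2 < 0 ->
  z = (c - th) / b -> p = b ^ 2 / (a * (c - th)) ->
  2 * b ^ 2 / (c - th) <= a ->
  0 <= b * (b - 2 * c * th + 2 * th ^ 2) ->
  a <= (b + c ^ 2 - 3 * c * th + 2 * th ^ 2
             + sqrt (b * (b - 2 * c * th + 2 * th ^ 2))) * b ^ 2 / (c - th) ^ 3 ->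
  good_profile a b c th [(1 - p, 0); (p, z)].
Proof.
  intros ha hb hth hzeta hz hp hlo hD hM.
  assert (hu : b ^ 2 < a * (c - th)).
  { assert (0 < a ^ 2) by (apply pow_lt; lra).
    assert (E : b ^ 2 - a * (c - th) = (b ^ 2 - a * (c - th)) / a ^ 2 * a ^ 2) by (field; lra).
    nra. }
  assert (hu0 : 0 < c - th).
  { assert (0 < b ^ 2) by (apply pow_lt; lra). nra. }
  assert (hc : c = th + b * z) by (rewrite hz; field; lra).
  assert (hz0 : 0 < z) by (rewrite hz; apply Rdiv_lt_0_compat; lra).
  clear hz. subst c.
  replace (th + b * z - th) with (b * z) in * by ring.
  assert (hp' : p = b / (a * z)) by (rewrite hp; field; lra).
  clear hp. subst p.
  assert (hA : b < a * z) by nra.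
  assert (hph : b / (a * z) <= 1/2).
  { assert (2 * b / z <= a) by (replace (2 * b / z) with (2 * b ^ 2 / (b * z)) by (field; lra); exact hlo).
    assert (2 * b <= a * z).
    { apply (Rmult_le_compat_r z) in H; [|lra]. replace (2 * b / z * z) with (2 * b) in H by (field; lra). lra. }
    apply (Rmult_le_reg_r (a * z)); [nra|]. replace (b / (a * z) * (a * z)) with b by (field; lra). lra. }
  assert (hp0 : 0 < b / (a * z)) by (apply Rdiv_lt_0_compat; nra).
  set (p := b / (a * z)) in *.
  set (r := sqrt (b * (b - 2 * (th + b * z) * th + 2 * th ^ 2))) in *.
  assert (hr : 0 <= r) by apply sqrt_pos.
  assert (hr2 : r ^ 2 = b ^ 2 * (1 - 2 * z * th)).
  { unfold r. rewrite <- Rsqr_pow2, Rsqr_sqrt by exact hD. ring. }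
  assert (hM' : b * ((a * z - b) * z ^ 2) <= b * (1 - z * th) + r).
  { replace ((b + (th + b * z) ^ 2 - 3 * (th + b * z) * th + 2 * th ^ 2 + r) * b ^ 2 / (b * z) ^ 3)
      with ((b + b * z * (b * z - th) + r) / (b * z ^ 3)) in hM by (field; lra).
    apply (Rmult_le_compat_r (b * z ^ 3)) in hM; [|apply Rmult_le_pos; [lra|apply pow_le; lra]].
    replace ((b + b * z * (b * z - th) + r) / (b * z ^ 3) * (b * z ^ 3))
      with (b + b * z * (b * z - th) + r) in hM by (field; lra).
    nra. }
  set (c := th + b * z) in *.
  assert (EPz : forall x, Pw a b c x z = 1/2 + (x - z) * (th + (a * z - b) * x))
    by (intros; unfold Pw, c; ring).
  assert (EP0 : forall x, Pw a b c x 0 = 1/2 + x * (th + b * z - b * x))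
    by (intros; unfold Pw, c; ring).
  assert (Pzpos : forall x, 0 <= x -> 0 <= Pw a b c x z).
  { intros x hx. rewrite EPz. apply (end_core a b th z r x); try assumption; lra. }
  assert (ID : forall x, (1 - p) * Pw a b c x 0 + p * Pw a b c x z - th * x = 1/2 - th * (b / a)).
  { intros x. rewrite EPz, EP0. unfold p. field. lra. }
  assert (Hmid : 0 <= Pw a b c 0 z <= 1).
  { split. apply Pzpos; lra. rewrite EPz. nra. }
  assert (Hmid' : 0 <= Pw a b c z 0 <= 1) by (rewrite Pw_anti; lra).
  assert (Hdiag : forall x, Pw a b c x x = 1/2) by (intros; unfold Pw; ring).
  set (S := [(1 - p, 0); (p, z)]).
  assert (Hsupp : forall x, x = 0 \/ x = z ->
     Ex S (fun y => payX a b c th x y) = 1/2 - th * (b / a)).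
  { intros x Hx. unfold S. simpl. unfold payX.
    rewrite (Pbar_eq a b c x 0), (Pbar_eq a b c x z).
    - pose proof (ID x). lra.
    - destruct Hx as [-> | ->]; [|rewrite Hdiag; lra]; exact Hmid.
    - destruct Hx as [-> | ->]; [rewrite Hdiag; lra|]; exact Hmid'. }
  assert (Hv : valid_mixed S).
  { split. constructor; [simpl; lra|]. constructor; [simpl; lra|]. constructor. simpl; lra. }
  destruct (equilibrium_of a b c th S (1/2 - th * (b / a))) as [Heq [HX HY]].
  - exact Hv.
  - intros x hx. unfold S. simpl. unfold payX.
    destruct (Rle_dec 0 (Pw a b c x 0)) as [Hp|Hp].
    + pose proof (Pbar_le a b c x 0 Hp).
      pose proof (Pbar_le a b c x z (Pzpos x hx)).
      pose proof (ID x).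
      assert ((1 - p) * (Pbar a b c x 0 - th * x) <= (1 - p) * (Pw a b c x 0 - th * x))
        by (apply Rmult_le_compat_l; lra).
      assert (p * (Pbar a b c x z - th * x) <= p * (Pw a b c x z - th * x))
        by (apply Rmult_le_compat_l; lra).
      lra.
    + rewrite (Pbar_neg a b c x 0) by lra.
      rewrite EP0 in Hp.
      assert (hxz : z < x).
      { destruct (Rlt_le_dec z x) as [|Hxz]; [assumption|]. exfalso. apply Hp.
        assert (0 <= x * (th + b * z - b * x)) by (apply Rmult_le_pos; nra). lra. }
      assert (hba : b / a <= z).
      { apply (Rmult_le_reg_r a); [lra|]. replace (b / a * a) with b by (field; lra). lra. }
      pose proof (Pbar_le1 a b c x z).
      assert (p * Pbar a b c x z <= p) by (apply (Rmult_le_compat_l p) in H; lra).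
      nra.
  - change ((1 - p) * Ex S (fun y => payX a b c th 0 y)
       + (p * Ex S (fun y => payX a b c th z y) + 0)
       = 1/2 - th * (b / a)).
    rewrite (Hsupp 0) by auto. rewrite (Hsupp z) by auto. lra.
  - unfold good_profile. fold S.
    split; [exact Heq|]. split.
    + intros x y [w1 [Hx _]] [w2 [Hy _]].
      unfold S in Hx, Hy. simpl in Hx, Hy.
      destruct Hx as [Hx|[Hx|[]]]; destruct Hy as [Hy|[Hy|[]]];
        injection Hx; injection Hy; intros; subst x y;
        try (rewrite Hdiag; lra); assumption.
    + assert (hm : mean S = b / a) by (unfold mean, S, p; simpl; field; lra).
      split; [exact hm|]. split; [|split; assumption].
      unfold variance. rewrite hm. unfold S, p, c; simpl. field. lra.
Qed.

Theorem proposition8 (a b c th : R)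
  (ha : 0 < a) (hb : 0 < b) (hc : 0 < c) (hth : 0 < th)
  (hzeta : (b ^ 2 - a * (c - th)) / a ^ 2 < 0) :
  let zeta := (b ^ 2 - a * (c - th)) / a ^ 2 in
  let kappa := b / a in
  let s := sqrt (- zeta) in
  let z := (c - th) / b in
  let p := b ^ 2 / (a * (c - th)) in
  let xbar := Rmax 0 (kappa - th / (2 * a * s)) in
  let aM := (b + c ^ 2 - 3 * c * th + 2 * th ^ 2
             + sqrt (b * (b - 2 * c * th + 2 * th ^ 2))) * b ^ 2 / (c - th) ^ 3 in
  (* Symmetric branch *)
  (a <= 2 * b ^ 2 / (c - th) ->
   0 <= Pw a b c 0 (kappa - s) ->
   0 <= Pw a b c xbar (kappa + s) ->
   good_profile a b c th [(1/2, kappa - s); (1/2, kappa + s)]) /\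
  (* Endpoint branch; a <= aM requires aM to be real *)
  (2 * b ^ 2 / (c - th) <= a ->
   0 <= b * (b - 2 * c * th + 2 * th ^ 2) ->
   a <= aM ->
   good_profile a b c th [(1 - p, 0); (p, z)]).
Proof.
  intros zeta kappa s z p xbar aM.
  assert (hu : b ^ 2 < a * (c - th)).
  { assert (0 < a ^ 2) by (apply pow_lt; lra).
    assert (E : b ^ 2 - a * (c - th) = (b ^ 2 - a * (c - th)) / a ^ 2 * a ^ 2) by (field; lra).
    nra. }
  assert (hu0 : 0 < c - th).
  { assert (0 < b ^ 2) by (apply pow_lt; lra). nra. }
  split.
  - intros Hlo H0 Hbar.
    assert (hz0 : 0 < - zeta).
    { unfold zeta. lra. }
    assert (hs2 : s ^ 2 = - zeta).
    { unfold s. rewrite <- Rsqr_pow2, Rsqr_sqrt by lra. reflexivity. }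
    assert (hs : 0 < s) by (unfold s; apply sqrt_lt_R0; lra).
    assert (hk : 0 < kappa) by (unfold kappa; apply Rdiv_lt_0_compat; lra).
    assert (hbk : b = a * kappa) by (unfold kappa; field; lra).
    assert (hck : c = th + a * (kappa ^ 2 + s ^ 2)).
    { rewrite hs2. unfold zeta, kappa. field. lra. }
    assert (hsk : s <= kappa).
    { assert (a * (c - th) <= 2 * b ^ 2).
      { apply (Rmult_le_compat_r (c - th)) in Hlo; [|lra].
        replace (2 * b ^ 2 / (c - th) * (c - th)) with (2 * b ^ 2) in Hlo by (field; lra). lra. }
      assert (s ^ 2 <= kappa ^ 2).
      { rewrite hbk in H. rewrite hck in H.
        assert (H2 : a ^ 2 * (s ^ 2 - kappa ^ 2) <= 0) by (ring_simplify; ring_simplify in H; lra).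
        assert (0 < a ^ 2) by (apply pow_lt; lra).
        destruct (Rle_dec (s ^ 2) (kappa ^ 2)); [assumption|]. nra. }
      nra. }
    apply (sym_branch a b c th kappa s); assumption.
  - intros Hlo HD HM.
    apply (end_branch a b c th z p); try assumption; reflexivity.
Qed.
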